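(* Let $G$ be a graph with $|V(G)|=2^k$, $\mathrm{enc}:V(G)\to\{0,1\}^k$ a bijection, and $R[G]=(P,N)$ with $P=\{\mathrm{enc}(u)1\mathrm{enc}(u)^R:u\in V(G)\}$, $N=\{\mathrm{enc}(u)1\mathrm{enc}(v)^R:uv\in E(G)\}$. Then every NFA consistent with $(P,N)$ has at least $\chi(G)$ states. Consequently $\mathrm{opt}_{DFA}(R[G])\ge\mathrm{opt}_{NFA}(R[G])\ge\chi(G)$.
   Context: $\chi(G)$ is the chromatic number. $\mathrm{opt}_{DFA}$ and $\mathrm{opt}_{NFA}$ denote the minimum number of states of a DFA (possibly with partial transition function), resp. NFA, over $\{0,1\}$ that accepts all of $P$ and rejects all of $N$. $x^R$ is string reversal. *)

(* Defs.v *)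
From HB Require Import structures.
From mathcomp Require Import all_boot.
Set Implicit Arguments. Unset Strict Implicit. Unset Printing Implicit Defensive.

(* Words over the alphabet {0,1}, encoded as bool (false = 0, true = 1). *)
Definition word := seq bool.

Definition proper_colorable (T : finType) (e : rel T) (n : nat) : bool :=
  [exists f : {ffun T -> 'I_n}, [forall u, forall v, e u v ==> (f u != f v)]].

Lemma proper_colorable_card (T : finType) (e : rel T) :
  irreflexive e -> proper_colorable e #|T|.
Proof.
move=> irr; apply/existsP; exists [ffun u => enum_rank u].
apply/forallP=> u; apply/forallP=> v; apply/implyP=> euv; rewrite !ffunE.
apply/negP=> /eqP/enum_rank_inj eq_uv; by rewrite eq_uv irr in euv.
Qed.

Lemma proper_colorable_ex (T : finType) (e : rel T) :
  irreflexive e -> exists n, proper_colorable e n.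
Proof. by move=> irr; exists #|T|; apply: proper_colorable_card. Qed.

Definition chromatic_number (T : finType) (e : rel T) (irr : irreflexive e) : nat :=
  ex_minn (proper_colorable_ex irr).

Record nfa (S : finType) := NFA {
  nfa_start : S;
  nfa_final : {set S};
  nfa_trans : S -> bool -> {set S} }.

Definition nfa_step (S : finType) (A : nfa S) (X : {set S}) (a : bool) : {set S} :=
  \bigcup_(s in X) nfa_trans A s a.

Definition nfa_accepts (S : finType) (A : nfa S) (w : word) : bool :=
  [exists s in foldl (nfa_step A) [set nfa_start A] w, s \in nfa_final A].

Record dfa (S : finType) := DFA {
  dfa_start : S;
  dfa_final : {set S};
  dfa_trans : S -> bool -> option S }.

Definition dfa_run (S : finType) (D : dfa S) (w : word) : option S :=
  foldl (fun (o : option S) a => if o is Some s then dfa_trans D s a else None)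
        (Some (dfa_start D)) w.

Definition dfa_accepts (S : finType) (D : dfa S) (w : word) : bool :=
  if dfa_run D w is Some s then s \in dfa_final D else false.

Definition consistent (acc : word -> bool) (P N : word -> Prop) : Prop :=
  (forall w, P w -> acc w) /\ (forall w, N w -> ~~ acc w).

Definition RG_word (k : nat) (x y : k.-tuple bool) : word :=
  (x : seq bool) ++ true :: rev (y : seq bool).

Definition RG_pos (T : finType) (k : nat) (enc : T -> k.-tuple bool) (w : word) : Prop :=
  exists u : T, w = RG_word (enc u) (enc u).

Definition RG_neg (T : finType) (e : rel T) (k : nat) (enc : T -> k.-tuple bool)
  (w : word) : Prop :=
  exists u v : T, e u v /\ w = RG_word (enc u) (enc v).

(* Main.v *)
Require Import Defs.
From HB Require Import structures.
From mathcomp Require Import all_boot.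
Set Implicit Arguments. Unset Strict Implicit.

Lemma chi_le (T : finType) (e : rel T) (irr : irreflexive e) (S : finType) (c : T -> S) :
  (forall u v, e u v -> c u != c v) -> chromatic_number irr <= #|S|.
Proof.
move=> H; rewrite /chromatic_number; case: ex_minnP => m _ Hm; apply: Hm.
apply/existsP; exists [ffun u => enum_rank (c u)].
apply/forallP=> u; apply/forallP=> v; apply/implyP=> euv; rewrite !ffunE.
apply/negP=> /eqP/enum_rank_inj eq_uv; by move: (H u v euv); rewrite eq_uv eqxx.
Qed.

Lemma step_mono (S : finType) (A : nfa S) (X Y : {set S}) a :
  X \subset Y -> nfa_step A X a \subset nfa_step A Y a.
Proof.
move=> /subsetP sXY; apply/subsetP=> t /bigcupP [s sX ts].
by apply/bigcupP; exists s => //; apply: sXY.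
Qed.

Lemma fold_mono (S : finType) (A : nfa S) w : forall X Y : {set S},
  X \subset Y -> foldl (nfa_step A) X w \subset foldl (nfa_step A) Y w.
Proof. elim: w => [|a w IH] X Y //= sXY; apply: IH; exact: step_mono. Qed.

Lemma fold_ex (S : finType) (A : nfa S) w : forall (X : {set S}) s',
  s' \in foldl (nfa_step A) X w -> exists2 s, s \in X & s' \in foldl (nfa_step A) [set s] w.
Proof.
elim: w => [|a w IH] X s' /=; first by move=> H; exists s' => //; rewrite inE.
move=> /IH [t /bigcupP [s sX ts] Ht]; exists s => //.
apply: (subsetP (@fold_mono _ A w [set t] _ _)) Ht.
apply/subsetP=> x; rewrite inE => /eqP ->; apply/bigcupP; exists s => //; by rewrite inE.
Qed.

Theorem mainTheorem7 (T : finType) (e : rel T) (k : nat)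
    (enc : T -> k.-tuple bool)
    (e_sym : symmetric e) (e_irr : irreflexive e)
    (cardT : #|T| = 2 ^ k) (enc_bij : bijective enc) :
  (forall (S : finType) (A : nfa S),
      consistent (nfa_accepts A) (RG_pos enc) (RG_neg e enc) ->
      chromatic_number e_irr <= #|S|)
  /\
  (forall (S : finType) (D : dfa S),
      consistent (dfa_accepts D) (RG_pos enc) (RG_neg e enc) ->
      chromatic_number e_irr <= #|S|).
Proof.
split.
- move=> S A [Hp Hn].
  pose X u := foldl (nfa_step A) [set nfa_start A] (enc u : seq bool).
  pose r u := true :: rev (enc u : seq bool).
  pose P u s := (s \in X u) && [exists f in foldl (nfa_step A) [set s] (r u), f \in nfa_final A].
  pose c u := odflt (nfa_start A) [pick s | P u s].
  have cP u : P u (c u).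
    rewrite /c; case: pickP => [s //|H0]; exfalso.
    have := Hp _ (ex_intro _ u erefl); rewrite /nfa_accepts /RG_word foldl_cat.
    move=> /existsP [f /andP [Hf Ff]].
    have [s sX Hs] := fold_ex Hf.
    have Pus : P u s by rewrite /P sX; apply/existsP; exists f; rewrite Hs Ff.
    by move: (H0 s); rewrite /= Pus.
  apply: (chi_le e_irr (c := c)) => u v euv; apply/negP => /eqP cuv.
  have := Hn _ (ex_intro _ u (ex_intro _ v (conj euv erefl))).
  move/negP; apply; rewrite /nfa_accepts /RG_word foldl_cat.
  have /andP [sX _] := cP u; have /andP [_ /existsP [f /andP [Hf Ff]]] := cP v.
  apply/existsP; exists f; rewrite Ff andbT.
  apply: (subsetP (@fold_mono _ A (r v) [set c v] _ _)) Hf.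
  by apply/subsetP => x; rewrite inE => /eqP ->; rewrite -cuv.
- move=> S D [Hp Hn].
  pose c u := odflt (dfa_start D) (dfa_run D (enc u : seq bool)).
  apply: (chi_le e_irr (c := c)) => u v euv; apply/negP => /eqP cuv.
  have Hacc w : dfa_accepts D w -> exists s, dfa_run D w = Some s.
    by rewrite /dfa_accepts; case: (dfa_run D w) => [s|] //; exists s.
  have runcat x y : dfa_run D (x ++ y) = foldl (fun (o : option S) a => if o is Some s then dfa_trans D s a else None) (dfa_run D x) y.
    by rewrite /dfa_run foldl_cat.
  have Ru w : dfa_run D (enc w : seq bool) = Some (c w).
    have := Hp _ (ex_intro _ w erefl); rewrite /dfa_accepts /RG_word runcat.
    rewrite /c; case: (dfa_run D _) => [s|] //=.
    by elim: (rev _) => //.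
  have := Hn _ (ex_intro _ u (ex_intro _ v (conj euv erefl))).
  move/negP; apply.
  have := Hp _ (ex_intro _ v erefl).
  by rewrite /dfa_accepts /RG_word !runcat !Ru cuv.
Qed.
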